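(* Let $M$ be a finite monoid and $e,f\in E(M)$, and let $X=MeM$, $Y=MfM$. Then $\mathrm{AIrr}_{\mathscr K(M)}(e,f)=fMe\setminus\nabla Y\nabla X$ and $\mathrm{Irr}_{\mathscr K(M)}(e,f)=\mathrm{Null}(\mathrm{AIrr}_{\mathscr K(M)}(e,f))$. In particular, both are $G_f\times G_e^{op}$-invariant subsets of $fMe$.
   Context: $E(M)$ is the set of idempotents. For a principal ideal $X$, $\nabla X=\{m\in M: X\not\subseteq MmM\}$, and $\nabla Y\nabla X=\{ab:a\in\nabla Y,b\in\nabla X\}$. The Karoubi envelope $\mathscr K(M)$ has objects $E(M)$, morphisms $e\to f$ the elements of $fMe$, composition the product of $M$. A morphism $m\colon e\to f$ is almost irreducible if whenever $m=gh$ in $\mathscr K(M)$, either $h$ is a split monomorphism or $g$ a split epimorphism; it is irreducible if moreover it is neither a split monomorphism nor a split epimorphism. $\mathrm{AIrr}_{\mathscr K(M)}(e,f)$, $\mathrm{Irr}_{\mathscr K(M)}(e,f)$ are the sets of such morphisms. $m$ is null if $m\notin mMm$; $\mathrm{Null}(A)$ is the set of null elements of $A$. $G_e$ is the group of units of $eMe$; $G_f\times G_e^{op}$-invariant means closed under left multiplication by $G_f$ and right multiplication by $G_e$. *)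

(* Defs.v *)
(* A finite monoid is given by a finType carrier together
   with an associative multiplication and a two-sided unit (explicit axioms
   appear as binders in the main theorem). *)
From mathcomp Require Import all_boot.
Set Implicit Arguments. Unset Strict Implicit. Unset Printing Implicit Defensive.

Section FinMonoidDefs.
Variables (T : finType) (mul : T -> T -> T).

Definition idem (e : T) : Prop := mul e e = e.

Definition pideal (x : T) : T -> Prop := fun y => exists a b, y = mul a (mul x b).

Definition nabla (X : T -> Prop) : T -> Prop :=
  fun m => ~ (forall y, X y -> pideal m y).

Definition setmul (A B : T -> Prop) : T -> Prop :=
  fun x => exists a b, A a /\ B b /\ x = mul a b.

(* f M e : the hom-set e -> f in the Karoubi envelope *)
Definition hom (e f : T) : T -> Prop := fun x => exists a, x = mul f (mul a e).

(* h : e -> k is a split monomorphism in K(M): r h = 1_e = e for some r : k -> e *)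
Definition split_mono (e k h : T) : Prop := exists r, hom k e r /\ mul r h = e.
Definition split_epi (k f g : T) : Prop := exists s, hom f k s /\ mul g s = f.

Definition AIrr (e f : T) : T -> Prop := fun m =>
  hom e f m /\
  forall k g h, idem k -> hom k f g -> hom e k h -> m = mul g h ->
    split_mono e k h \/ split_epi k f g.

Definition Irr (e f : T) : T -> Prop := fun m =>
  AIrr e f m /\ ~ split_mono e f m /\ ~ split_epi e f m.

Definition null (m : T) : Prop := ~ (exists a, m = mul m (mul a m)).
Definition Null (A : T -> Prop) : T -> Prop := fun m => A m /\ null m.

Definition unitgrp (e : T) : T -> Prop := fun u =>
  hom e e u /\ exists v, hom e e v /\ mul u v = e /\ mul v u = e.

Definition biinvariant (e f : T) (A : T -> Prop) : Prop :=
  forall u v x, unitgrp f u -> unitgrp e v -> A x -> A (mul u (mul x v)).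

End FinMonoidDefs.

(* Main.v *)
Require Import Defs.
From mathcomp Require Import all_boot.
From Stdlib Require Import Classical.
Set Implicit Arguments. Unset Strict Implicit.

Section Aux.
Variables (T : finType) (mul : T -> T -> T) (one : T).
Hypotheses (mulA : associative mul) (mul1m : left_id one mul) (mulm1 : right_id one mul).
Local Infix "**" := mul (at level 40, left associativity).

Definition pw w n := iter n (mul w) one.

Lemma iter_pw w n y : iter n (mul w) y = pw w n ** y.
Proof.
elim: n => [|n IH] /=; first by rewrite /pw /= mul1m.
by rewrite IH /pw /= mulA.
Qed.

Lemma pwD w a b : pw w (a + b) = pw w a ** pw w b.
Proof. by rewrite {1}/pw iterD iter_pw. Qed.

Lemma pw1 w : pw w 1 = w.
Proof. by rewrite /pw /= mulm1. Qed.

Lemma pw_rep e w v : e = w ** e ** v -> forall n, e = pw w n ** e ** pw v n.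
Proof.
move=> E; elim=> [|n IH]; first by rewrite /pw /= mul1m mulm1.
rewrite -[n.+1]addn1 !pwD !pw1.
have -> : pw w n ** w = w ** pw w n.
  by have := pwD w n 1; have := pwD w 1 n; rewrite pw1 addnC => <- ->.
transitivity (w ** (pw w n ** e ** pw v n) ** v); first by rewrite -IH.
by rewrite !mulA.
Qed.

Lemma pigeon w : exists i j, (i < j)%N /\ pw w i = pw w j.
Proof.
apply: NNPP => H.
pose F := fun i : 'I_(#|T|.+1) => pw w i.
have Finj : injective F.
  move=> x y Fxy; apply: val_inj => /=.
  case: (ltngtP x y) => // [xy|yx].
    by case: H; exists x, y.
  by case: H; exists y, x.
by have := @leq_card _ _ F Finj; rewrite card_ord ltnn.
Qed.

Lemma stab e h u v : e = u ** (h ** v) -> h = h ** e -> exists r, e = r ** h.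
Proof.
move=> E1 E2.
have E3 : e = (u ** h) ** e ** v by rewrite -(mulA u h e) -E2 -mulA.
have R := pw_rep E3.
have [i [j [ij Eij]]] := pigeon (u ** h).
have Ed : pw (u ** h) (j - i) ** e = e.
  rewrite {1}(R i) !mulA -pwD subnK ?(ltnW ij) // -Eij -(R i) //.
move: Ed; case Hd: (j - i)%N => [|d].
  by move/eqP: Hd; rewrite subn_eq0 leqNgt ij.
move=> Ed; exists (pw (u ** h) d ** u).
by rewrite -{1}Ed -[d.+1]addn1 pwD pw1 -!mulA -E2.
Qed.
End Aux.

Section Main.
Variables (T : finType) (mul : T -> T -> T) (one : T).
Hypotheses (mulA : associative mul) (mul1m : left_id one mul) (mulm1 : right_id one mul).
Local Infix "**" := mul (at level 40, left associativity).

Lemma stab' e h u v : e = u ** (h ** v) -> h = e ** h -> exists r, e = h ** r.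
Proof.
move=> E1 E2.
have A' : associative (fun x y => mul y x) by move=> x y z; rewrite mulA.
have := @stab T (fun x y => mul y x) one A' mulm1 mul1m e h v u.
by apply => //=; rewrite -mulA.
Qed.

Lemma homP a b x : idem mul a -> idem mul b -> hom mul a b x <-> b ** x = x /\ x ** a = x.
Proof.
move=> ha hb; split.
  case=> c ->; split; first by rewrite mulA hb.
  by rewrite -!mulA ha.
by case=> E1 E2; exists x; rewrite E2 E1.
Qed.

Lemma idem1 : idem mul one. Proof. by rewrite /idem mul1m. Qed.

Lemma nablaP a m : nabla mul (pideal mul a) m <-> ~ pideal mul m a.
Proof.
split.
  move=> H [c [d E]]; apply: H => y [p [q ->]].
  by exists (p ** c), (d ** q); rewrite E !mulA.
move=> H H'; apply: H; apply: H'.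
by exists one, one; rewrite mul1m mulm1.
Qed.

Variables (e f : T) (he : idem mul e) (hf : idem mul f).

Lemma part1 m : AIrr mul e f m <->
  (hom mul e f m /\ ~ setmul mul (nabla mul (pideal mul f)) (nabla mul (pideal mul e)) m).
Proof.
split.
  case=> Hm H; split => //; case=> a [b [Ha [Hb Em]]].
  move/nablaP: Ha => Ha; move/nablaP: Hb => Hb.
  have [Fm Me] := (homP _ he hf).1 Hm.
  have Em' : m = (f ** a) ** (b ** e) by rewrite -Fm -Me Em !mulA.
  have := H one (f ** a) (b ** e) idem1.
  case.
  - by apply/(homP _ idem1 hf); rewrite mulA hf mulm1.
  - by apply/(homP _ he idem1); rewrite mul1m -mulA he.
  - by [].
  - case=> r [_ Er]; apply: Hb; exists r, e; by rewrite Er.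
  - case=> s [_ Es]; apply: Ha; exists f, s; by rewrite mulA Es.
case=> Hm Hn; split => // k g h Hk Hg Hh Em.
have [Kh He'] := (homP _ he Hk).1 Hh.
have [Fg Gk] := (homP _ Hk hf).1 Hg.
case: (classic (pideal mul h e)) => [[a [b Eab]]|Nhe].
  have [r Er] := stab mulA mul1m mulm1 Eab (esym He').
  left; exists (e ** r ** k); split.
    by apply/(homP _ Hk he); rewrite ?mulA ?he // -!mulA Hk.
  by rewrite -mulA Kh -mulA -Er he.
case: (classic (pideal mul g f)) => [[a [b Eab]]|Ngf].
  have [r Er] := stab' Eab (esym Fg).
  right; exists (k ** r ** f); split.
    by apply/(homP _ hf Hk); rewrite ?mulA ?Hk // -!mulA hf.
  by rewrite !mulA Gk -Er hf.
exfalso; apply: Hn; exists g, h; split; first exact/nablaP.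
by split; first exact/nablaP.
Qed.

Lemma part2 m : Irr mul e f m <-> Null mul (AIrr mul e f) m.
Proof.
have Hom m' : AIrr mul e f m' -> f ** m' = m' /\ m' ** e = m'.
  by case=> H _; exact: (homP _ he hf).1 H.
split.
  case=> HA [Nmono Nepi]; split => //; case=> a Ema.
  have [Fm Me] := Hom _ HA.
  pose h := e ** a ** m.
  have := HA.2 e m h he HA.1.
  case.
  - apply/(homP _ he he); split; first by rewrite /h !mulA he.
    by rewrite /h -mulA Me.
  - by rewrite /h !mulA Me -mulA -Ema.
  - case=> r [Hr Er]; apply: Nmono.
    have [Er1 _] := (homP _ he he).1 Hr.
    exists (r ** e ** a ** f); split.
      apply/(homP _ hf he); split; first by rewrite !mulA Er1.
      by rewrite -mulA hf.
    transitivity (r ** h); last exact: Er.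
    by rewrite -mulA Fm /h !mulA.
  - by [].
case=> HA Nl; split => //.
have [Fm Me] := Hom _ HA.
split.
  case=> r [_ Er]; apply: Nl; exists r; by rewrite Er Me.
case=> s [_ Es]; apply: Nl; exists s; by rewrite mulA Es Fm.
Qed.

Lemma unit_facts g u : idem mul g -> unitgrp mul g u ->
  exists u', [/\ g ** u = u, u ** g = u, u' ** u = g & u ** u' = g].
Proof.
move=> hg [Hu [u' [_ [uu' u'u]]]].
have [] := (homP _ hg hg).1 Hu => A B; by exists u'.
Qed.

Lemma conj_eq u v x u' v' : f ** x = x -> x ** e = x -> u' ** u = f -> v ** v' = e ->
  x = u' ** (u ** (x ** v)) ** v'.
Proof.
move=> Fx Xe uu vv.
by rewrite !mulA uu Fx -(mulA _ v v') vv Xe.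
Qed.

Lemma inv_AIrr : biinvariant mul e f (AIrr mul e f).
Proof.
move=> u v x Hu Hv /part1 [Hx Hxn]; apply/part1.
have [u' [Fu Uf u'u uu']] := unit_facts hf Hu.
have [v' [Ev Ve v'v vv']] := unit_facts he Hv.
have [Fx Xe] := (homP _ he hf).1 Hx.
split.
  apply/(homP _ he hf); split; first by rewrite mulA Fu.
  by rewrite -!mulA Ve.
case=> a [b [Ha [Hb E]]]; apply: Hxn.
exists (u' ** a), (b ** v'); split.
  apply/nablaP => [[c [d Ecd]]]; move/nablaP: Ha; apply.
  by exists (c ** u'), d; rewrite {1}Ecd !mulA.
split.
  apply/nablaP => [[c [d Ecd]]]; move/nablaP: Hb; apply.
  by exists c, (v' ** d); rewrite {1}Ecd !mulA.
by rewrite (conj_eq Fx Xe u'u vv') E !mulA.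
Qed.

Lemma inv_Irr : biinvariant mul e f (Irr mul e f).
Proof.
move=> u v x Hu Hv /part2 [Hx Nl]; apply/part2; split.
  exact: inv_AIrr.
have [u' [Fu Uf u'u uu']] := unit_facts hf Hu.
have [v' [Ev Ve v'v vv']] := unit_facts he Hv.
have [Fx Xe] := (homP _ he hf).1 Hx.1.
have Fx' y : y ** f ** x = y ** x by rewrite -mulA Fx.
have Xe' y : y ** x ** e = y ** x by rewrite -mulA Xe.
case=> c Ec; apply: Nl; exists (v ** c ** u).
rewrite {1}(conj_eq Fx Xe u'u vv') Ec !mulA u'u Fx.
by rewrite -(mulA _ v v') vv' Xe' ?mulA.
Qed.

End Main.

Theorem mainTheorem17 (T : finType) (mul : T -> T -> T) (one : T)
  (mulA : associative mul) (mul1m : left_id one mul) (mulm1 : right_id one mul)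
  (e f : T) (he : idem mul e) (hf : idem mul f) :
  let X := pideal mul e in
  let Y := pideal mul f in
  (forall m, AIrr mul e f m <->
      (hom mul e f m /\ ~ setmul mul (nabla mul Y) (nabla mul X) m)) /\
  (forall m, Irr mul e f m <-> Null mul (AIrr mul e f) m) /\
  biinvariant mul e f (AIrr mul e f) /\ (forall m, AIrr mul e f m -> hom mul e f m) /\
  biinvariant mul e f (Irr mul e f) /\ (forall m, Irr mul e f m -> hom mul e f m).
Proof.
move=> X Y.
split; first exact: (part1 mulA mul1m mulm1 he hf).
split; first exact: (part2 mulA he hf).
split; first exact: (inv_AIrr mulA mul1m mulm1 he hf).
split; first by move=> m [].
split; first exact: (inv_Irr mulA mul1m mulm1 he hf).
by move=> m [[]].
Qed.
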